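(* Let $w'\in\mathcal{W}^e_n$ and let $(O',E')\to(O,E)$ be one application of the step $(\omega)$ during the computation of $\Omega(w')$. Then $(O',E')$ is obtained from $(O,E)$ by applying one step $(\psi)$.
   Context: Fix a finite totally ordered alphabet $A$. Words are finite sequences over $A$; $-$ is the empty word. $<$ is lexicographic order (a proper prefix is smaller than the word); $\infty$ is a formal symbol with $w<\infty$ for all words $w$. A Lyndon word is a nonempty word strictly smaller than each of its proper nonempty suffixes. Every word has a unique Lyndon factorization $w=\ell_1\cdots\ell_m$ into Lyndon words with $\ell_1\ge\dots\ge\ell_m$, written $\ell_1|\cdots|\ell_m$. Odd/even refer to lengths. For a Lyndon word $\ell$ with $|\ell|\ge2$, its standard factorization is $\ell=rs$ with $s$ the longest proper suffix of $\ell$ that is Lyndon (equivalently the smallest proper nonempty suffix). $\mathcal{W}^e_n$: words of length $n$ whose Lyndon factors are all even except possibly one factor of length one. Iterated standard factorization (ISF) of a Lyndon word $\ell$, $|\ell|\ge2$, with respect to $u$ (a word or $\infty$): the unique factorization $\ell=r_js_js_{j-1}\cdots s_1$, $j\ge1$, such that (a) for every $i\in[j]$, $s_i$ is the smallest proper nonempty suffix of $r_js_j\cdots s_i$; (b) for $i\in[j-1]$, $s_i$ is even and $s_i<u$; (c) $s_j$ is odd or $u\le s_j$. Computation of $\Omega(w')$ for $w'\in\mathcal{W}^e_n$: start with $(O',E')=(-,w')$; if $n$ is odd, remove the unique length-one Lyndon factor from $E'$ and set $O'$ equal to that letter. While $E'$ is nonempty, apply step $(\omega)$: let $O'=o'_1|\cdots|o'_h$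 and $E'=e'_1|\cdots|e'_k$ (with $o'_h=\infty$ if $O'$ is empty). If $o'_h<e'_1$, update to (S') $(O'e'_1,\ e'_2\cdots e'_k)$. Otherwise let $e'_1=r_js_js_{j-1}\cdots s_1$ be the ISF of $e'_1$ with respect to $o'_h$ and update to (P') $(o'_1\cdots o'_{h-1}r_js_jo'_h,\ s_{j-1}\cdots s_1e'_2\cdots e'_k)$ if $o'_h\le s_j$, or to (F') $(O's_jr_j,\ s_{j-1}\cdots s_1e'_2\cdots e'_k)$ if $s_j<o'_h$. When $E'$ is empty, $\Omega(w')=O'$. Step $(\psi)$ on a pair of words $(O,E)$ with $|O|\ge2$: let $O=o_1|\cdots|o_m$ (with $o_{m-1}=\infty$ if $m=1$); $o_m$ is splittable if $|o_m|\ge2$ and its standard factorization $o_m=rs$ satisfies $s<o_{m-1}$. Update to: (S) $(o_1\cdots o_{m-1}r,\ sE)$ if splittable and $r$ odd; (P) $(o_1\cdots o_{m-1}s,\ rE)$ if splittable and $r$ even; (F) $(o_1\cdots o_{m-2},\ o_mo_{m-1}E)$ if not splittable. *)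

(* Defs.v *)
From mathcomp Require Import all_boot all_order.
Set Implicit Arguments. Unset Strict Implicit. Unset Printing Implicit Defensive.
Import Order.TTheory.

Section Words.
Variables (d : Order.disp_t) (A : finOrderType d).

Definition word := seq A.

Fixpoint lexlt (u v : word) : bool :=
  match u, v with
  | [::], [::] => false
  | [::], _ :: _ => true
  | _ :: _, [::] => false
  | a :: u', b :: v' => (a < b)%O || ((a == b) && lexlt u' v')
  end.

Definition lexle (u v : word) : bool := (u == v) || lexlt u v.

(* words-or-infinity: None stands for the formal symbol oo (w < oo for all w) *)
Definition wordinf := option word.

Definition lt_wi (w : word) (u : wordinf) : bool :=
  if u is Some v then lexlt w v else true.
Definition wi_lt (u : wordinf) (w : word) : bool :=
  if u is Some v then lexlt v w else false.
Definition wi_le (u : wordinf) (w : word) : bool :=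
  if u is Some v then lexle v w else false.

Definition psufs (w : word) : seq word := [seq drop i w | i <- iota 1 (size w).-1].

Definition lyndon (w : word) : bool := (w != [::]) && all (lexlt w) (psufs w).

Definition lfact (w : word) (ls : seq word) : bool :=
  all lyndon ls && sorted (fun x y => lexle y x) ls && (flatten ls == w).

Definition std_fact (l r s : word) : bool :=
  [&& lyndon l, 1 < size l, l == r ++ s, s \in psufs l, lyndon s &
      all (fun t => lyndon t ==> (size t <= size s)) (psufs l)].

Definition smallest_psuf (w s : word) : bool := (s \in psufs w) && all (lexle s) (psufs w).

(* ISF of l w.r.t. u : l = r s_j s_{j-1} ... s_1, with ss = [:: s_j; ...; s_1] *)
Definition isf (l : word) (u : wordinf) (r : word) (ss : seq word) : bool :=
  [&& lyndon l, 1 < size l, 0 < size ss, l == r ++ flatten ss,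
      (* (a) s_i smallest proper nonempty suffix of r s_j ... s_i *)
      all (fun k => smallest_psuf (r ++ flatten (take k ss)) (nth [::] ss k.-1))
          (iota 1 (size ss)),
      all (fun s => ~~ odd (size s) && lt_wi s u) (behead ss) &
      odd (size (head [::] ss)) || wi_le u (head [::] ss)].

Definition inWe (n : nat) (w : word) : Prop :=
  size w = n /\ exists ls, lfact w ls /\
    (count (fun l => odd (size l)) ls <= 1)%N /\
    all (fun l => odd (size l) ==> (size l == 1%N)) ls.

Definition lastf (os : seq word) : wordinf :=
  if os is [::] then None else Some (last [::] os).

Definition state := (word * word)%type.

Definition omega_init (w : word) (st : state) : Prop :=
  exists ls, lfact w ls /\
    if odd (size w) then
      exists ls1 a ls2, ls = ls1 ++ [:: a] :: ls2 /\ st = ([:: a], flatten (ls1 ++ ls2))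
    else st = ([::], w).

(* one step (omega) : (O', E') -> (O, E) *)
Definition omega_step (st st' : state) : Prop :=
  let: (Ow, Ew) := st in
  exists os e1 es, lfact Ow os /\ lfact Ew (e1 :: es) /\
    let u := lastf os in
    (wi_lt u e1 /\ st' = (Ow ++ e1, flatten es))
    \/ (~~ wi_lt u e1 /\ exists r ss, isf e1 u r ss /\
          let sj := head [::] ss in
          ((exists os1 oh, os = rcons os1 oh /\ lexle oh sj /\
              st' = (flatten os1 ++ r ++ sj ++ oh, flatten (behead ss) ++ flatten es))
           \/ (lt_wi sj u /\
              st' = (Ow ++ sj ++ r, flatten (behead ss) ++ flatten es)))).

(* states reached during the computation of Omega(w) (while E' is nonempty
   the step (omega) applies) *)
Inductive omega_reach (w : word) : state -> Prop :=
  | oreach_init st : omega_init w st -> omega_reach w st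
  | oreach_step st st' : omega_reach w st -> omega_step st st' -> omega_reach w st'.

Definition psi_step (st st' : state) : Prop :=
  let: (Ow, Ew) := st in
  (1 < size Ow)%N /\ exists os1 om, lfact Ow (rcons os1 om) /\
    let om1 := lastf os1 in
    ((exists r s, std_fact om r s /\ lt_wi s om1 /\
        ((odd (size r) /\ st' = (flatten os1 ++ r, s ++ Ew))
         \/ (~~ odd (size r) /\ st' = (flatten os1 ++ s, r ++ Ew))))
     \/ ((~ exists r s, std_fact om r s /\ lt_wi s om1) /\
         exists os2 o, os1 = rcons os2 o /\ st' = (flatten os2, om ++ o ++ Ew))).

End Words.

(* Main.v *)
Require Import Defs.
From mathcomp Require Import all_boot all_order.
From Stdlib Require Import Lia.
From mathcomp Require Import zify.
Set Implicit Arguments. Unset Strict Implicit. Unset Printing Implicit Defensive.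
Import Order.TTheory.

Section Lex.
Variables (d : Order.disp_t) (A : finOrderType d).
Implicit Types (u v w x y z t : seq A).

Lemma lexlt_irr u : lexlt u u = false.
Proof. by elim: u => //= a u ->; rewrite ltxx eqxx. Qed.

Lemma lexlt_nil_l v : lexlt [::] v = (v != [::]).
Proof. by case: v. Qed.

Lemma lexlt_nil_r u : lexlt u [::] = false.
Proof. by case: u. Qed.

Lemma lexlt_trans u v w : lexlt u v -> lexlt v w -> lexlt u w.
Proof.
elim: u v w => [|a u IH] [|b v] [|c w] //=.
case/orP=> [ab|/andP[/eqP <- uv]]; case/orP=> [bc|/andP[/eqP <- vw]].
- by rewrite (lt_trans ab bc).
- by rewrite ab.
- by rewrite bc.
- by rewrite eqxx (IH _ _ uv vw) orbT.
Qed.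

Lemma lexlt_asym u v : lexlt u v -> lexlt v u = false.
Proof. by move=> uv; apply/negbTE/negP => /(lexlt_trans uv); rewrite lexlt_irr. Qed.

Lemma lexlt_total u v : u != v -> lexlt u v || lexlt v u.
Proof.
elim: u v => [|a u IH] [|b v] //=.
case: (ltgtP a b) => //= ab.
subst b => uv; apply: IH; apply: contra uv => /eqP ->.
by [].
Qed.

Lemma lexlt_catl t x y : lexlt (t ++ x) (t ++ y) = lexlt x y.
Proof. by elim: t => //= a t ->; rewrite ltxx eqxx. Qed.

Lemma lexlt_prefix u v : lexlt u (u ++ v) = (v != [::]).
Proof. by rewrite -{1}(cats0 u) lexlt_catl lexlt_nil_l. Qed.

Lemma lexlt_cases u v : lexlt u v ->
  (exists2 z, z != [::] & v = u ++ z) \/ (forall x y, lexlt (u ++ x) (v ++ y)).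
Proof.
elim: u v => [|a u IH] [|b v] //=.
- by move=> _; left; exists (b :: v).
case/orP=> [ab|/andP[/eqP <- uv]]; first by right=> x y; rewrite ab.
case: (IH _ uv) => [[z nz ->]|H]; first by left; exists z.
by right=> x y; rewrite ltxx eqxx H.
Qed.

Lemma lexle_refl u : lexle u u.
Proof. by rewrite /lexle eqxx. Qed.

Lemma lexleNlt u v : lexle u v = ~~ lexlt v u.
Proof.
rewrite /lexle; case: (eqVneq u v) => [->|uv]; first by rewrite lexlt_irr.
have := lexlt_total uv; case uv_: (lexlt u v) => /=.
  by rewrite (lexlt_asym uv_).
by move=> ->.
Qed.

Lemma lexltW u v : lexlt u v -> lexle u v.
Proof. by rewrite /lexle => ->; rewrite orbT. Qed.

Lemma lexle_lt u v : lexle u v -> u != v -> lexlt u v.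
Proof. by rewrite /lexle => /orP[/eqP->|//]; rewrite eqxx. Qed.

Lemma lexle_trans u v w : lexle u v -> lexle v w -> lexle u w.
Proof.
rewrite /lexle => /orP[/eqP->//|uv] /orP[/eqP<-|vw]; first by rewrite uv orbT.
by rewrite (lexlt_trans uv vw) orbT.
Qed.

Lemma lexle_lt_trans u v w : lexle u v -> lexlt v w -> lexlt u w.
Proof. by rewrite /lexle => /orP[/eqP->//|uv] /(lexlt_trans uv). Qed.

Lemma lexlt_le_trans u v w : lexlt u v -> lexle v w -> lexlt u w.
Proof. by rewrite /lexle => uv /orP[/eqP<-//|/(lexlt_trans uv)]. Qed.

Lemma lexle_anti u v : lexle u v -> lexle v u -> u = v.
Proof.
rewrite lexleNlt => /negbTE vu; rewrite /lexle vu orbF.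
by move/eqP.
Qed.

Lemma lexle_prefix u v : lexle u (u ++ v).
Proof. by case: (eqVneq v [::]) => [->|nv]; rewrite ?cats0 ?lexle_refl // lexltW // lexlt_prefix. Qed.

Lemma lexle_cases u v : lexle u v ->
  (exists z, v = u ++ z) \/ (forall x y, lexlt (u ++ x) (v ++ y)).
Proof.
rewrite /lexle => /orP[/eqP->|/lexlt_cases[[z _ ->]|H]]; last by right.
- by left; exists [::]; rewrite cats0.
- by left; exists z.
Qed.

Lemma lt_suffix_cat y v : lexle y v -> v != [::] -> lexlt y (v ++ y).
Proof.
move=> yv nv; case: (lexle_cases yv) => [[z vE]|H].
  subst v; rewrite -catA lexlt_prefix; apply: contra nv.
  by rewrite -!size_eq0 !size_cat addnC.
by have := H [::] y; rewrite cats0.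
Qed.

Lemma psufsP t w : reflect (exists2 i, 0 < i < size w & t = drop i w) (t \in psufs w).
Proof.
apply: (iffP mapP) => [[i]|[i hi ->]].
  rewrite mem_iota => /andP[h1 h2] ->; exists i => //; apply/andP; split => //.
  lia.
exists i => //; rewrite mem_iota; case/andP: hi => h1 h2; rewrite h1 /=.
lia.
Qed.

Lemma psufs_drop i w : 0 < i < size w -> drop i w \in psufs w.
Proof. by move=> h; apply/psufsP; exists i. Qed.

Lemma psufs_cat p t : p != [::] -> t != [::] -> t \in psufs (p ++ t).
Proof.
move=> np nt; apply/psufsP; exists (size p); last by rewrite drop_size_cat.
rewrite size_cat lt0n size_eq0 np /= -{1}(addn0 (size p)) ltn_add2l lt0n size_eq0 nt.
by [].
Qed.

Lemma psufs_catE t w : t \in psufs w -> exists p, [/\ p != [::], t != [::] & w = p ++ t].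
Proof.
case/psufsP=> i /andP[h1 h2] ->; exists (take i w); split; last by rewrite cat_take_drop.
- by rewrite -size_eq0 size_take h2 -lt0n.
- by rewrite -size_eq0 size_drop subn_eq0 -ltnNge.
Qed.

Lemma psufs_size t w : t \in psufs w -> 0 < size t < size w.
Proof.
case/psufs_catE=> p [np nt ->]; rewrite size_cat lt0n size_eq0 nt /=.
by rewrite -{1}(add0n (size t)) ltn_add2r lt0n size_eq0.
Qed.

Lemma lyndonP w : reflect (w != [::] /\ forall t, t \in psufs w -> lexlt w t) (lyndon w).
Proof. by apply: (iffP andP) => [[-> /allP]|[-> H]]; [|split=> //; apply/allP]. Qed.

Lemma lyndon_lt w t : lyndon w -> t \in psufs w -> lexlt w t.
Proof. by case/lyndonP=> _; apply. Qed.

Lemma lyndon_nil w : lyndon w -> w != [::].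
Proof. by case/lyndonP. Qed.


Lemma cat_eq_nil x y : (x ++ y == [::]) = (x == [::]) && (y == [::]).
Proof. by case: x. Qed.

Lemma drop_cat_lt i x y : i < size x -> drop i (x ++ y) = drop i x ++ y.
Proof. by move=> h; rewrite drop_cat h. Qed.

Lemma drop_cat_ge i x y : size x <= i -> drop i (x ++ y) = drop (i - size x) y.
Proof. by move=> h; rewrite drop_cat ltnNge h. Qed.

Lemma drop_nil i x : i < size x -> drop i x != [::].
Proof. by move=> h; rewrite -size_eq0 size_drop subn_eq0 -ltnNge. Qed.

Lemma lyndon_cat x y : lyndon x -> lyndon y -> lexlt x y -> lyndon (x ++ y).
Proof.
move=> lx ly xy; have nx := lyndon_nil lx; have ny := lyndon_nil ly.
have hxy : lexlt (x ++ y) y.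
  case: (lexlt_cases xy) => [[z nz yE]|H]; last by have := H y [::]; rewrite cats0.
  rewrite {2}yE lexlt_catl; apply: lyndon_lt => //; rewrite yE; exact: psufs_cat.
apply/lyndonP; split; first by apply: contra nx; rewrite -!size_eq0 size_cat addn_eq0 => /andP[].
move=> t /psufsP[i /andP[i0 ilt] ->].
case: (ltnP i (size x)) => ix.
  rewrite drop_cat_lt //; have hv : drop i x \in psufs x by apply: psufs_drop; rewrite i0.
  case: (lexlt_cases (lyndon_lt lx hv)) => [[z nz vE]|H]; last exact: H.
  by move: (psufs_size hv); rewrite vE size_cat; lia.
rewrite drop_cat_ge //; case: (eqVneq (i - size x) 0) => [->|k0]; first by rewrite drop0.
apply: (lexlt_trans hxy); apply: lyndon_lt => //; apply: psufs_drop.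
by move: ilt; rewrite size_cat lt0n k0 /=; lia.
Qed.

Lemma suffix_ge s t : lyndon s -> t != [::] -> lexlt s (t ++ s) -> lexle s t.
Proof.
move=> ls nt h; rewrite lexleNlt; apply/negP => ts.
case: (lexlt_cases ts) => [[z nz sE]|H].
  have hz : lexlt s z by apply: lyndon_lt => //; rewrite sE; exact: psufs_cat.
  have : lexlt (t ++ z) (t ++ s) by rewrite -sE.
  by rewrite lexlt_catl (lexlt_asym hz).
by have := H s [::]; rewrite cats0 (lexlt_asym h).
Qed.

Lemma smallest_lyndon w s : smallest_psuf w s -> lyndon s.
Proof.
case/andP=> hs /allP hall; case: (psufs_catE hs) => p [np ns wE].
apply/lyndonP; split => // t ht; case: (psufs_catE ht) => q [nq nt sE].
have htw : t \in psufs w by rewrite wE sE catA; apply: psufs_cat => //; rewrite cat_eq_nil negb_and np.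
apply: lexle_lt (hall _ htw) _; apply: contra_neq nq => ts.
by move: (congr1 size sE); rewrite size_cat -ts -{1}(add0n (size s)) => /addIn /esym/size0nil.
Qed.

Lemma std_left_lyndon x s : lyndon (x ++ s) -> smallest_psuf (x ++ s) s -> lyndon x.
Proof.
move=> lxs hsm; have ls := smallest_lyndon hsm; case/andP: hsm => hs /allP hall.
have nx : x != [::].
  rewrite -size_eq0 -lt0n; move: (psufs_size hs); rewrite size_cat => /andP[_ h]; move: h; by rewrite -{1}(add0n (size s)) ltn_add2r.
apply/lyndonP; split => // t ht; case: (psufs_catE ht) => p [np nt xE].
rewrite -[lexlt x t]negbK -lexleNlt; apply/negP => tx.
have tx' : lexlt t x.
  apply: lexle_lt tx _; apply: contra_neq np => tE.
  by move: (congr1 size xE); rewrite size_cat tE -{1}(add0n (size x)) => /addIn /esym/size0nil.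
have h1 : lexlt (x ++ s) (t ++ s).
  by apply: lyndon_lt => //; rewrite xE -catA; apply: psufs_cat => //; rewrite cat_eq_nil negb_and nt.
case: (lexlt_cases tx') => [[v nv vE]|H].
  have hv : v ++ s \in psufs (x ++ s) by rewrite vE -catA; apply: psufs_cat => //; rewrite cat_eq_nil negb_and nv.
  have := hall _ hv; rewrite lexleNlt.
  by move: h1; rewrite {1}vE -catA lexlt_catl => ->.
by have := H s s; rewrite (lexlt_asym h1).
Qed.

Lemma suffix_cat_ge x y : lyndon y -> (forall v, v \in psufs x -> lexle y v) ->
  forall t, t \in psufs (x ++ y) -> lexle y t.
Proof.
move=> ly hx t /psufsP[i /andP[i0 ilt] ->].
case: (ltnP i (size x)) => ix.
  rewrite drop_cat_lt //; apply: lexltW; apply: lt_suffix_cat; last exact: drop_nil.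
  by apply: hx; apply: psufs_drop; rewrite i0.
rewrite drop_cat_ge //; case: (eqVneq (i - size x) 0) => [->|k0]; first by rewrite drop0 lexle_refl.
apply: lexltW; apply: lyndon_lt => //; apply: psufs_drop.
by move: ilt; rewrite size_cat lt0n k0 /=; lia.
Qed.

Lemma std_fact_intro x y : lyndon (x ++ y) -> lyndon y -> x != [::] ->
  (forall v, v \in psufs x -> lexle y v) -> std_fact (x ++ y) x y.
Proof.
move=> lxy ly nx hx; have ny := lyndon_nil ly.
rewrite /std_fact lxy ly eqxx psufs_cat //=.
apply/andP; split.
  by move: nx ny; rewrite -!size_eq0 -!lt0n => h1 h2; rewrite size_cat; exact: (leq_add h1 h2).
apply/allP => t /psufsP[i /andP[i0 ilt] ->]; apply/implyP => lt.
case: (ltnP i (size x)) => ix.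
  move: lt; rewrite drop_cat_lt // => lt.
  have h1 : lexlt y (drop i x ++ y).
    by apply: lt_suffix_cat; [apply: hx; apply: psufs_drop; rewrite i0 | exact: drop_nil].
  have h2 : lexlt (drop i x ++ y) y by apply: lyndon_lt => //; apply: psufs_cat => //; exact: drop_nil.
  by rewrite (lexlt_asym h1) in h2.
by rewrite drop_cat_ge // size_drop leq_subr.
Qed.

Lemma cat_lt_lyndon a x y : lyndon a -> x != [::] -> lexlt x a -> lexlt y a -> lexlt (x ++ y) a.
Proof.
move=> la nx xa ya; case: (lexlt_cases xa) => [[z nz aE]|H]; last by have := H y [::]; rewrite cats0.
rewrite aE lexlt_catl; apply: lexlt_trans ya _; apply: lyndon_lt => //.
by rewrite aE; apply: psufs_cat.
Qed.

Implicit Types (ls a b c : seq (seq A)) (U : wordinf A).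

Definition geR := fun x y : seq A => lexle y x.

Lemma geR_trans : transitive geR.
Proof. by move=> y x z h1 h2; rewrite /geR (lexle_trans h2 h1). Qed.

Lemma lfactP w ls : reflect [/\ all (@lyndon d A) ls, sorted geR ls & flatten ls = w] (lfact w ls).
Proof.
rewrite /lfact; apply: (iffP idP) => [/andP[/andP[a b] /eqP c]|[a b c]] //.
by rewrite a b c eqxx.
Qed.

Lemma lfact_min ls : all (@lyndon d A) ls -> sorted geR ls -> ls != [::] ->
  forall i, i < size (flatten ls) -> lexle (last [::] ls) (drop i (flatten ls)).
Proof.
elim: ls => [|l ls IH] //= /andP[ll all] srt _ i.
have hl : lexle l (drop i l) \/ size l <= i.
  case: (ltnP i (size l)) => il; last by right.
  left; case: (eqVneq i 0) => [->|i0]; first by rewrite drop0 lexle_refl.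
  by apply: lexltW; apply: lyndon_lt => //; apply: psufs_drop; rewrite lt0n i0.
case: ls IH srt all => [|y ls] IH srt all.
  rewrite /= cats0 => il; by case: hl => // h; move: il; rewrite ltnNge h.
move=> ilt; have srt' : sorted geR (y :: ls) by move: srt => /= /andP[].
have hm : lexle (last y ls) l.
  have := order_path_min geR_trans srt => /allP; apply.
  exact: mem_last.
rewrite /=; case: (ltnP i (size l)) => il.
  rewrite drop_cat_lt //; case: hl => [hl|]; last by rewrite leqNgt il.
  have {hl} hm := lexle_trans hm hl.
  have nv := drop_nil il.
  case: (lexle_cases hm) => [[z ->]|H]; first by rewrite -catA lexle_prefix.
  by apply: lexltW; have := H [::] (flatten (y :: ls)); rewrite cats0.
rewrite drop_cat_ge //; have := IH all srt' isT (i - size l); apply.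
by move: ilt; rewrite size_cat /=; lia.
Qed.

Lemma lfact_nil ls : lfact [::] ls -> ls = [::].
Proof.
case/lfactP=> al _; case: ls al => // l ls /= /andP[ll _] /eqP.
by rewrite cat_eq_nil (negbTE (lyndon_nil ll)).
Qed.

Lemma lfact_rconsK w ls l : lfact w (rcons ls l) -> lfact (flatten ls) ls.
Proof.
case/lfactP=> al srt _; apply/lfactP; split => //.
  by move: al; rewrite all_rcons => /andP[].
by move: srt; rewrite -cats1 => /cat_sorted2 [].
Qed.

Lemma lfact_uniq w a b : lfact w a -> lfact w b -> a = b.
Proof.
elim/last_ind: a w b => [|a x IH] w b ha hb.
  by case/lfactP: ha => _ _ /= wE; subst w; rewrite (lfact_nil hb).
case/lastP: b hb => [|b y] hb.
  move: hb => /lfactP[_ _ /= wE]; subst w; move/lfactP: ha => [al _].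
  rewrite flatten_rcons => /eqP; rewrite cat_eq_nil.
  by move: al; rewrite all_rcons => /andP[/lyndon_nil /negbTE -> _]; rewrite andbF.
have ha' := ha; have hb' := hb.
case/lfactP: ha => ala sa wa; case/lfactP: hb => alb sb wb.
have key : forall c z, all (@lyndon d A) (rcons c z) -> sorted geR (rcons c z) ->
    flatten (rcons c z) = w -> forall i, i < size w -> lexle z (drop i w).
  move=> c z al s fE i; rewrite -fE => h; have := lfact_min al s _ h.
  rewrite last_rcons; apply; by case: (c).
have lx : lyndon x by move: ala; rewrite all_rcons => /andP[].
have ly : lyndon y by move: alb; rewrite all_rcons => /andP[].
have dx : drop (size (flatten a)) w = x by rewrite -wa flatten_rcons drop_size_cat.
have dy : drop (size (flatten b)) w = y by rewrite -wb flatten_rcons drop_size_cat.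
have sx : size (flatten a) < size w.
  rewrite -wa flatten_rcons size_cat -{1}(addn0 (size _)) ltn_add2l lt0n size_eq0.
  exact: lyndon_nil.
have sy : size (flatten b) < size w.
  rewrite -wb flatten_rcons size_cat -{1}(addn0 (size _)) ltn_add2l lt0n size_eq0.
  exact: lyndon_nil.
have h1 := key _ _ ala sa wa _ sy; rewrite dy in h1.
have h2 := key _ _ alb sb wb _ sx; rewrite dx in h2.
have xy := lexle_anti h1 h2; clear dx dy h1 h2; subst y.
have fab : flatten a = flatten b.
  have sz : size (flatten a) = size (flatten b).
    have := congr1 size wb; rewrite -wa !flatten_rcons !size_cat => /eqP; rewrite eqn_add2r => /eqP h; exact/esym.
  move: wa; rewrite -wb !flatten_rcons => /eqP; rewrite eqseq_cat; last exact: sz.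
  by case/andP => /eqP.
congr rcons; apply: (IH (flatten a)); first exact: lfact_rconsK ha'.
by rewrite fab; exact: lfact_rconsK hb'.
Qed.

Section ISF.
Variables (l : seq A) (u : wordinf A) (r : seq A) (ss : seq (seq A)).
Hypothesis hisf : isf l u r ss.

Let P k := r ++ flatten (take k ss).

Lemma isf_basic : [/\ lyndon l, 0 < size ss, l = r ++ flatten ss,
   all (fun s => ~~ odd (size s) && lt_wi s u) (behead ss) &
   odd (size (head [::] ss)) || wi_le u (head [::] ss)].
Proof.
by move: hisf => /andP[? /andP[_ /andP[? /andP[/eqP ? /andP[_ /andP[? ?]]]]]].
Qed.

Lemma isf_sm k : 0 < k <= size ss -> smallest_psuf (P k) (nth [::] ss k.-1).
Proof.
move: hisf => /andP[_ /andP[_ /andP[_ /andP[_ /andP[/allP H _]]]]] hk; apply: (H k); rewrite mem_iota.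
by case/andP: hk => h1 h2; rewrite h1 /= add1n ltnS.
Qed.

Lemma isf_PS k : k < size ss -> P k.+1 = P k ++ nth [::] ss k.
Proof. by move=> hk; rewrite /P (take_nth [::] hk) flatten_rcons catA. Qed.

Lemma isf_lyndonP k : k <= size ss -> lyndon (P k).
Proof.
have [hl _ hE _ _] := isf_basic.
move=> hk; move: {2}(size ss - k) (erefl (size ss - k)) => m.
elim: m k hk => [|m IH] k hk hm.
  have -> : k = size ss by lia.
  by rewrite /P take_size -hE.
have hk' : k < size ss by lia.
have := IH k.+1 hk' ltac:(lia); rewrite (isf_PS hk') => hly.
apply: std_left_lyndon hly _; rewrite -(isf_PS hk').
by have := isf_sm (k := k.+1) ltac:(lia).
Qed.

Lemma isf_all_lyndon : all (@lyndon d A) ss.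
Proof.
apply/(all_nthP [::]) => i hi; have := isf_sm (k := i.+1) ltac:(lia).
exact: smallest_lyndon.
Qed.

Lemma isf_P_nil k : k <= size ss -> P k != [::].
Proof. by move/isf_lyndonP/lyndon_nil. Qed.

Lemma isf_sorted : sorted geR ss.
Proof.
apply/(sortedP [::]) => i hi; rewrite /geR.
have hsm := isf_sm (k := i.+2) ltac:(lia); rewrite /= in hsm.
have ly := smallest_lyndon hsm.
move: hsm; rewrite (isf_PS hi) (isf_PS (ltnW hi)) => /andP[_ /allP hall].
have ni : nth [::] ss i != [::].
  by have := isf_all_lyndon => /all_nthP; move/(_ [::] i (ltnW hi)) => /lyndon_nil.
apply: suffix_ge => //; apply: lexle_lt.
  apply: hall; rewrite -catA; apply: psufs_cat; first exact: isf_P_nil (ltnW (ltnW hi)).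
  by rewrite cat_eq_nil negb_and ni.
apply/eqP => /(congr1 size); rewrite size_cat => /eqP.
by rewrite -{1}(add0n (size (nth [::] ss i.+1))) eqn_add2r eq_sym size_eq0 (negbTE ni).
Qed.

End ISF.

Lemma isf_cons (l : seq A) (u : wordinf A) (r sj : seq A) (st : seq (seq A)) : isf l u r (sj :: st) ->
 [/\ l = r ++ sj ++ flatten st, lyndon l, lyndon (r ++ sj), smallest_psuf (r ++ sj) sj &
  [/\ lyndon r, lyndon sj, all (@lyndon d A) st, sorted geR (sj :: st) &
     [/\ (st != [::] -> smallest_psuf l (last sj st)),
      all (fun s => ~~ odd (size s) && lt_wi s u) st &
      odd (size sj) || wi_le u sj]]].
Proof.
move=> h; have [hl _ hE hb hc] := isf_basic h.
have h1 := isf_sm h (k := 1) isT; rewrite /= take0 /= cats0 in h1.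
have h2 := isf_lyndonP h (k := 1) isT; rewrite /= take0 /= cats0 in h2.
have h3 := isf_lyndonP h (k := 0) isT; rewrite /= ?take0 /= ?cats0 in h3.
have := isf_all_lyndon h => /= /andP[ls lst].
have hE' : l = r ++ sj ++ flatten st by rewrite hE.
have hs := isf_sorted h.
have hlast : st != [::] -> smallest_psuf l (last sj st).
  move=> nst; have := isf_sm h (k := size (sj :: st)).
  rewrite take_size -hE nth_last /=; apply; rewrite /=; lia.
by [].
Qed.

Lemma lastf_rcons (os : seq (seq A)) x : lastf (rcons os x) = Some x.
Proof. by case: os => //= y os; rewrite last_rcons. Qed.

Lemma lt_wi_le x y U : lexle x y -> lt_wi y U -> lt_wi x U.
Proof. by case: U => //= v; apply: lexle_lt_trans. Qed.

Lemma wi_le_lt s U : wi_le U s -> lt_wi s U -> False.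
Proof. by case: U => //= v vs sv; move: (lexle_lt_trans vs sv); rewrite lexlt_irr. Qed.

Lemma even_flatten ls : all (fun s => ~~ odd (size s)) ls -> ~~ odd (size (flatten ls)).
Proof. by elim: ls => //= s ls IH /andP[h1 h2]; rewrite size_cat oddD (negbTE h1) /= IH. Qed.

Lemma sorted_catR a b : sorted geR a -> sorted geR b ->
  (a != [::] -> b != [::] -> lexle (head [::] b) (last [::] a)) -> sorted geR (a ++ b).
Proof.
case: a => [|x a] //= sa sb H; rewrite cat_path sa /=.
case: b sb H => [|y b] //= sb H; rewrite sb andbT; exact: H.
Qed.

Lemma lfact_rcons_intro O os x : lfact O os -> lyndon x -> lt_wi x (lastf os) ->
  lfact (O ++ x) (rcons os x).
Proof.
case/lfactP=> al s <- lx h; apply/lfactP; split.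
- by rewrite all_rcons lx al.
- rewrite -cats1; apply: sorted_catR => //; case: os {al s} h => //= y os h _ _.
  exact: lexltW.
- by rewrite flatten_rcons.
Qed.

Lemma lfact_cons w l ls : lfact w (l :: ls) ->
  [/\ lyndon l, lfact (flatten ls) ls, w = l ++ flatten ls & forall e es, ls = e :: es -> lexle e l].
Proof.
case/lfactP => /= /andP[ll al] s wE; split => //.
- by apply/lfactP; split => //; exact: path_sorted s.
- by move=> e es lsE; move: s; rewrite lsE /= => /andP[].
Qed.

Lemma size_gt1 z x y : x != [::] -> y != [::] -> 1 < size (z ++ x ++ y).
Proof.
rewrite -!size_eq0 -!lt0n !size_cat => h1 h2.
by apply: leq_trans (leq_addl _ _); exact: (leq_add h1 h2).
Qed.

Lemma catx_neq t s : t != [::] -> t ++ s != s.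
Proof.
move=> nt; apply/eqP => /(congr1 size) /eqP; rewrite size_cat.
by rewrite -{2}(add0n (size s)) eqn_add2r size_eq0 (negbTE nt).
Qed.

Definition InvO (os es : seq (seq A)) : Prop := forall os1 (ob : seq A), os = rcons os1 ob ->
  [/\ odd (size ob), lt_wi ob (lastf os1),
      (forall e es', es = e :: es' -> lt_wi e (lastf os1)) &
      (forall e es', es = e :: es' -> all (lexle e) (psufs ob))].

Definition Inv (st : state A) : Prop := exists os es,
  [/\ lfact st.1 os, lfact st.2 es, all (fun e => ~~ odd (size e)) es & InvO os es].

Lemma lfact_mem w ls x : lfact w ls -> x \in ls -> lyndon x.
Proof. by case/lfactP => /allP al _ _; apply: al. Qed.

Lemma lfact_last_lyndon w os x : lfact w (rcons os x) -> lyndon x.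
Proof. by move/lfact_mem; apply; rewrite mem_rcons mem_head. Qed.

Lemma lfact_lastf_lyndon w os (a : seq A) : lfact w os -> lastf os = Some a -> lyndon a.
Proof.
case/lastP: os => [|os x] //; rewrite lastf_rcons => h [<-].
exact: lfact_last_lyndon h.
Qed.

Lemma lt_wi_cat w os x y : lfact w os -> x != [::] -> lt_wi x (lastf os) ->
  lt_wi y (lastf os) -> lt_wi (x ++ y) (lastf os).
Proof.
move=> h nx; case E: (lastf os) => [a|] //= xa ya.
exact: cat_lt_lyndon (lfact_lastf_lyndon h E) nx xa ya.
Qed.

Lemma step_main O' E' O E : Inv (O', E') -> omega_step (O', E') (O, E) ->
  Inv (O, E) /\ psi_step (O, E) (O', E').
Proof.
move=> [os0 [es0 [hO0 hE0 hev hinv]]] hS; rewrite /omega_step in hS; case: hS => os [e1 [es [hO [hE H]]]]; rewrite /= in hO0 hE0.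
have ? := lfact_uniq hO hO0; subst os0.
have ? := lfact_uniq hE hE0; subst es0.
have [le1 hEs E'E e2le] := lfact_cons hE.
move: hev => /= /andP[ev1 evs].
have ne1 := lyndon_nil le1.
case: H => [[hlt [OE EE]]|[hnlt [r [ss [hisf Hc]]]]].
-
  subst O E.
  case/lastP: os hO hO0 hinv hlt => [|os1 oh] hO _ hinv hlt //.
  rewrite lastf_rcons /= in hlt.
  have [odd_oh ohlt hI3 hI4] := hinv os1 oh erefl.
  have hI3e := hI3 e1 es erefl; have hI4e := hI4 e1 es erefl.
  have hO1 := lfact_rconsK hO.
  have O'E : O' = flatten os1 ++ oh by case/lfactP: hO => _ _ <-; rewrite flatten_rcons.
  have loh := lfact_last_lyndon hO.
  have noh := lyndon_nil loh.
  have ly := lyndon_cat loh le1 hlt.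
  have hnew : lt_wi (oh ++ e1) (lastf os1) by apply: lt_wi_cat hO1 noh ohlt hI3e.
  have hOn : lfact (O' ++ e1) (rcons os1 (oh ++ e1)).
    by rewrite O'E -catA; apply: lfact_rcons_intro.
  have hvx : forall v, v \in psufs oh -> lexle e1 v by move=> v hv; exact: (allP hI4e).
  split.
  + exists (rcons os1 (oh ++ e1)), es; split => //= os1' b /rcons_inj [<- <-]; split => //.
    * by rewrite size_cat oddD odd_oh (negbTE ev1).
    * by move=> e es' esE; apply: lt_wi_le (e2le e es' esE) hI3e.
    * move=> e es' esE; apply/allP => t ht; apply: lexle_trans (e2le _ _ esE) _.
      exact: suffix_cat_ge le1 hvx t ht.
  + split; first by rewrite O'E -catA; apply: size_gt1.
    exists os1, (oh ++ e1); split => //; left; exists oh, e1; split.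
      exact: std_fact_intro.
    split => //; left; split => //.
    by rewrite O'E E'E.
-
  case: ss hisf Hc => [|sj st] hisf.
    by move: hisf => /andP[_ /andP[_ /andP[]]].
  move=> /= Hc.
  have [e1E _ lrs hsm [lr lsj lst srt [hlast hst hc]]] := isf_cons hisf.
  have nr := lyndon_nil lr; have nsj := lyndon_nil lsj.
  have rsj_lt : lexlt (r ++ sj) sj by apply: lyndon_lt lrs _; apply: psufs_cat.
  have r_lt_sj : lexlt r sj by apply: lexlt_trans rsj_lt; rewrite lexlt_prefix.
  have hsjv : forall v, v \in psufs (r ++ sj) -> lexle sj v.
    by case/andP: hsm => _ /allP.
  have hEn : lfact (flatten st ++ flatten es) (st ++ es).
    apply/lfactP; split; last by rewrite flatten_cat.
    - by rewrite all_cat lst; case/lfactP: hEs.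
    - apply: sorted_catR; first exact: path_sorted srt.
        by case/lfactP: hEs.
      move=> nst nes.
      have hl : lexlt e1 (last sj st) by have /andP[hh _] := hlast nst; apply: lyndon_lt.
      have -> : last [::] st = last sj st by case: (st) nst.
      case: (es) e2le nes => [|e2 es'] // e2le _ /=.
      exact: lexle_trans (e2le e2 es' erefl) (lexltW hl).
  have evst : all (fun e => ~~ odd (size e)) st.
    by apply/allP => s hs; have /andP[] := allP hst s hs.
  have hevn : all (fun e => ~~ odd (size e)) (st ++ es) by rewrite all_cat evst.
  have even_x : ~~ odd (size (r ++ sj)).
    by move: ev1; rewrite e1E catA size_cat oddD (negbTE (even_flatten evst)) addbF.
  have hhd : forall e es', st ++ es = e :: es' -> (e \in st) \/ (st = [::] /\ lexle e e1).
    case: (st) => [|s' st'] e es' /=; last by case=> -> _; left; rewrite mem_head.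
    by move=> esE; right; split => //; exact: e2le esE.
  case: Hc => [[os1 [oh [osE [ohsj [OE EE]]]]]|[sjlt [OE EE]]].
  +
    subst os O E; rewrite lastf_rcons /= in hnlt.
    have e1le : lexle e1 oh by rewrite lexleNlt.
    have [odd_oh ohlt hI3 hI4] := hinv os1 oh erefl.
    have hO1 := lfact_rconsK hO.
    have loh := lfact_last_lyndon hO.
    have e1lt : lexlt e1 oh.
      apply: lexle_lt e1le _; apply/eqP => e1oh; move: ev1; by rewrite e1oh odd_oh.
    have xlt : lexlt (r ++ sj) oh.
      by apply: lexle_lt_trans e1lt; rewrite e1E catA; apply: lexle_prefix.
    have nx : r ++ sj != [::] by exact: lyndon_nil lrs.
    have ly := lyndon_cat lrs loh xlt.
    have hnew : lt_wi ((r ++ sj) ++ oh) (lastf os1).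
      apply: (lt_wi_cat hO1 nx _ ohlt); exact: lt_wi_le (lexltW xlt) ohlt.
    have hOn : lfact (flatten os1 ++ r ++ sj ++ oh) (rcons os1 ((r ++ sj) ++ oh)).
      have -> : flatten os1 ++ r ++ sj ++ oh = flatten os1 ++ ((r ++ sj) ++ oh) by rewrite -catA.
      exact: lfact_rcons_intro hO1 ly hnew.
    have hen_lt : forall e es', st ++ es = e :: es' -> lexlt e oh.
      move=> e es' /hhd [hin|[_ hle]]; last exact: lexle_lt_trans hle e1lt.
      by case/andP: (allP hst e hin) => _; rewrite lastf_rcons.
    have hvx : forall v, v \in psufs (r ++ sj) -> lexle oh v.
      by move=> v hv; exact: lexle_trans ohsj (hsjv v hv).
    split.
    * exists (rcons os1 ((r ++ sj) ++ oh)), (st ++ es); split => //= os1' b /rcons_inj [<- <-]; split => //.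
      -- by rewrite size_cat oddD odd_oh (negbTE even_x).
      -- by move=> e es' esE; apply: lt_wi_le (lexltW (hen_lt e es' esE)) ohlt.
      -- move=> e es' esE; apply/allP => t ht; apply: lexle_trans (lexltW (hen_lt e es' esE)) _.
         exact: suffix_cat_ge loh hvx t ht.
    * split; first by rewrite catA; apply: size_gt1 => //; exact: lyndon_nil loh.
      exists os1, ((r ++ sj) ++ oh); split => //; left; exists (r ++ sj), oh; split.
        exact: std_fact_intro.
      split => //; right; split => //.
      have -> : O' = flatten os1 ++ oh by case/lfactP: hO => _ _ <-; rewrite flatten_rcons.
      by rewrite E'E e1E !catA.
  +
    subst O E.
    have sj_odd : odd (size sj).
      by case/orP: hc => // hle; case: (wi_le_lt hle sjlt).
    have r_odd : odd (size r).
      move: ev1; rewrite e1E !size_cat !oddD (negbTE (even_flatten evst)) sj_odd addbF.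
      by case: (odd (size r)).
    have hOn : lfact (O' ++ sj ++ r) (rcons (rcons os sj) r).
      rewrite catA; apply: lfact_rcons_intro => //; first exact: lfact_rcons_intro.
      by rewrite lastf_rcons.
    have hrv : forall t, t \in psufs r -> lexle sj t.
      move=> t ht; case: (psufs_catE ht) => p [np nt rE].
      apply: suffix_ge => //; apply: lexle_lt; last by rewrite eq_sym catx_neq.
      apply: hsjv; rewrite rE -catA; apply: psufs_cat => //; by rewrite cat_eq_nil negb_and nt.
    have hen_lt : forall e es', st ++ es = e :: es' -> lexlt e sj.
      move=> e es' /hhd [hin|[stE hle]].
        have := order_path_min geR_trans srt => /allP /(_ e hin) /lexle_lt; apply.
        apply: contraTneq hin => ->; apply/negP => hin.
        by have /andP[] := allP hst sj hin; rewrite sj_odd.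
      apply: lexle_lt_trans hle _; by rewrite e1E stE /= cats0.
    split.
    * exists (rcons (rcons os sj) r), (st ++ es); split => //= os1' b /rcons_inj [<- <-]; split => //.
      -- by rewrite lastf_rcons.
      -- by move=> e es' esE; rewrite lastf_rcons; exact: hen_lt esE.
      -- move=> e es' esE; apply/allP => t ht; apply: lexle_trans (lexltW (hen_lt e es' esE)) _.
         exact: hrv.
    * split; first exact: size_gt1.
      exists (rcons os sj), r; split => //; right; split.
        move=> [r1 [s1 [hsf hlt']]]; rewrite lastf_rcons /= in hlt'.
        have hs1 : s1 \in psufs r by case/and5P: hsf => _ _ _ ? _.
        by have := hrv s1 hs1; rewrite lexleNlt hlt'.
      exists os, sj; split => //.
      have -> : O' = flatten os by case/lfactP: hO.
      by rewrite E'E e1E !catA.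
Qed.

Lemma odd_flatten_count ls : odd (size (flatten ls)) = odd (count (fun l => odd (size l)) ls).
Proof. by elim: ls => //= l ls IH; rewrite size_cat oddD IH; case: (odd (size l)). Qed.

Lemma all_even_count ls : all (fun e => ~~ odd (size e)) ls = (count (fun l => odd (size l)) ls == 0).
Proof. by elim: ls => //= l ls ->; case: (odd (size l)). Qed.

Lemma init_inv n w st : inWe n w -> omega_init w st -> Inv st.
Proof.
case=> _ [ls [hl [hcnt _]]] [ls' [hl' H]].
have ? := lfact_uniq hl' hl; subst ls'.
have hodd : odd (size w) = odd (count (fun l => odd (size l)) ls).
  by case/lfactP: (hl) => _ _ <-; rewrite odd_flatten_count.
move: H; case: ifP => hw.
- move=> [ls1 [a [ls2 [lsE stE]]]]; subst st ls.
  exists [:: [:: a]], (ls1 ++ ls2); split => /=.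
  + apply/lfactP; split => //=.
  + case/lfactP: hl => al srt _; apply/lfactP; split => //.
      by move: al; rewrite !all_cat /=.
    apply: (subseq_sorted geR_trans _ srt).
    by apply: cat_subseq (subseq_refl ls1) (subseq_cons ls2 [:: a]).
  + move: hcnt; rewrite all_even_count !count_cat /=.
    by rewrite addnCA add1n ltnS leqn0.
  + move=> os1 b; case: os1 => [|x os1] /=; first by case=> <-.
    by case: os1.
- move=> ->; exists [::], ls; split => //=.
  + rewrite all_even_count; move: hcnt hodd; rewrite hw.
    by case: (count _ ls) => // -[].
  + by move=> os1 b; case: os1.
Qed.

End Lex.

Theorem lemma4p24 (d : Order.disp_t) (A : finOrderType d) (n : nat) (w : seq A)
  (Ow' Ew' Ow Ew : seq A) :
  inWe n w ->
  omega_reach w (Ow', Ew') ->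
  omega_step (Ow', Ew') (Ow, Ew) ->
  psi_step (Ow, Ew) (Ow', Ew').
Proof.
move=> hW hR hS.
have hI : forall st, omega_reach w st -> Inv st.
  move=> st; elim => [st0 h|st1 [O1 E1] _ IH h].
    exact: init_inv hW h.
  by case: st1 IH h => O0 E0 IH h; case: (step_main IH h).
by case: (step_main (hI _ hR) hS).
Qed.
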